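(* Let $\Phi$ be a linear map between finite-dimensional matrix spaces, represented by coefficients $\Phi^{b,d}_{a,c}$ via $\Phi(|b\rangle\langle d|)=\sum_{a,c}\Phi^{b,d}_{a,c}|a\rangle\langle c|$ in the incoherent bases. Then $\Phi$ is completely positive iff there are matrices $K_n$ with entries $K_{n_{a,b}}$ such that $\Phi^{b,d}_{a,c}=\sum_n K_{n_{a,b}}K^*_{n_{c,d}}$ for all $a,b,c,d$. Under this condition: (1) $\Phi$ is a detection-incoherent quantum operation iff there is a conditional probability distribution $p(a|b)$ (i.e. $p(a|b)\ge0$, $\sum_a p(a|b)=1$) with $\Phi^{b,d}_{a,a}=p(a|b)\delta_{b,d}$ for all $a,b,d$; (2) $\Phi$ is a creation-incoherent quantum operation iff there is a conditional probability distribution $p(b|a)$ with $\Phi^{a,a}_{b,c}=p(b|a)\delta_{b,c}$ for all $a,b,c$, and $\sum_a\Phi^{b,d}_{a,a}=\delta_{b,d}$ for all $b,d$; (3) $\Phi$ is a detection-creation-incoherent quantum operation iff there are conditional probability distributions with $\Phi^{b,d}_{a,a}=p(a|b)\delta_{b,d}$ for all $a,b,d$ and $\Phi^{a,a}_{b,c}=p(b|a)\delta_{b,c}$ for all $a,b,c$.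
   Context: Every finite-dimensional system carries a fixed orthonormal incoherent basis $\{|i\rangle\}$; the total dephasing map is $\Delta(\rho)=\sum_i|i\rangle\langle i|\rho|i\rangle\langle i|$. A quantum operation is a completely positive trace-preserving linear map. $\Phi$ is detection-incoherent iff $\Delta\Phi=\Delta\Phi\Delta$, creation-incoherent iff $\Phi\Delta=\Delta\Phi\Delta$, and detection-creation-incoherent iff $\Delta\Phi=\Phi\Delta$. *)

(* Defs.v *)
From HB Require Import structures.
From mathcomp Require Import all_boot all_order all_algebra.
Set Implicit Arguments. Unset Strict Implicit. Unset Printing Implicit Defensive.
Import Order.TTheory GRing.Theory Num.Theory.
Local Open Scope ring_scope.

(* Scalars: any numeric algebraically closed field C (e.g. the complex numbers);
   0 <= z means z is real and nonnegative; Num.conj is complex conjugation.  *)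

Definition psd_fun (C : numClosedFieldType) (I : finType) (A : I -> I -> C) : Prop :=
  forall x : I -> C, 0 <= \sum_(i : I) \sum_(j : I) Num.conj (x i) * A i j * x j.

(* The ampliation id_k (x) Phi, acting on (k*m)x(k*m) matrices written with
   row/column indices in 'I_k * 'I_m, i.e. X = sum_{i,j} |i><j| (x) X_{ij}. *)
Definition ampl (C : numClosedFieldType) (m n k : nat)
  (Phi : 'M[C]_m -> 'M[C]_n) (X : ('I_k * 'I_m)%type -> ('I_k * 'I_m)%type -> C)
  : ('I_k * 'I_n)%type -> ('I_k * 'I_n)%type -> C :=
  fun ia jc => Phi (\matrix_(b, d) X (ia.1, b) (jc.1, d)) ia.2 jc.2.

Definition completely_positive (C : numClosedFieldType) (m n : nat)
  (Phi : 'M[C]_m -> 'M[C]_n) : Prop :=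
  forall (k : nat) (X : ('I_k * 'I_m)%type -> ('I_k * 'I_m)%type -> C),
    psd_fun X -> psd_fun (ampl Phi X).

Definition trace_preserving (C : numClosedFieldType) (m n : nat)
  (Phi : 'M[C]_m -> 'M[C]_n) : Prop :=
  forall A : 'M[C]_m, \tr (Phi A) = \tr A.

(* Quantum operation: completely positive trace-preserving linear map
   (linearity is part of the type {linear _ -> _} used in the statement). *)
Definition quantum_operation (C : numClosedFieldType) (m n : nat)
  (Phi : 'M[C]_m -> 'M[C]_n) : Prop :=
  completely_positive Phi /\ trace_preserving Phi.

Definition dephase (C : numClosedFieldType) (m : nat) (A : 'M[C]_m) : 'M[C]_m :=
  \matrix_(i, j) (if i == j then A i j else 0).

Definition detection_incoherent (C : numClosedFieldType) (m n : nat)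
  (Phi : 'M[C]_m -> 'M[C]_n) : Prop :=
  forall A, dephase (Phi A) = dephase (Phi (dephase A)).

Definition creation_incoherent (C : numClosedFieldType) (m n : nat)
  (Phi : 'M[C]_m -> 'M[C]_n) : Prop :=
  forall A, Phi (dephase A) = dephase (Phi (dephase A)).

Definition detection_creation_incoherent (C : numClosedFieldType) (m n : nat)
  (Phi : 'M[C]_m -> 'M[C]_n) : Prop :=
  forall A, dephase (Phi A) = Phi (dephase A).

Definition coef (C : numClosedFieldType) (m n : nat)
  (Phi : 'M[C]_m -> 'M[C]_n) (b d : 'I_m) (a c : 'I_n) : C :=
  Phi (delta_mx b d) a c.

(* p is a conditional probability distribution p(y|x) = p x y. *)
Definition cond_prob (C : numClosedFieldType) (X Y : finType) (p : X -> Y -> C) : Prop :=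
  (forall x y, 0 <= p x y) /\ (forall x, \sum_(y : Y) p x y = 1).

(* Main.v *)
Require Import Defs.
From HB Require Import structures.
From mathcomp Require Import all_boot all_order all_algebra.
From mathcomp Require Import ring.
Set Implicit Arguments. Unset Strict Implicit. Unset Printing Implicit Defensive.
Import Order.TTheory GRing.Theory Num.Theory.
Local Open Scope ring_scope.

Definition bf (C : numClosedFieldType) (I : finType) (J : I -> I -> C) (x y : I -> C) : C :=
  \sum_(i : I) \sum_(j : I) (x i)^* * J i j * y j.
Definition ev {C : numClosedFieldType} {I : finType} (u : I) : I -> C := fun i => (i == u)%:R.

Lemma sum_dr (C : numClosedFieldType) (I : finType) (u : I) (F : I -> C) :
  \sum_i F i * (i == u)%:R = F u.
Proof.
rewrite (bigD1 u) //= eqxx mulr1 big1 ?addr0 // => i /negbTE ->; by rewrite mulr0.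
Qed.
Lemma sum_dl (C : numClosedFieldType) (I : finType) (u : I) (F : I -> C) :
  \sum_i (i == u)%:R * F i = F u.
Proof. under eq_bigr do rewrite mulrC. exact: sum_dr. Qed.

Section BF.
Context (C : numClosedFieldType) (I : finType) (J : I -> I -> C).
Lemma bfDl x y z : bf J (fun i => x i + y i) z = bf J x z + bf J y z.
Proof.
rewrite /bf -big_split; apply: eq_bigr => i _; rewrite -big_split; apply: eq_bigr => j _.
by rewrite rmorphD /= !mulrDl.
Qed.
Lemma bfDr x y z : bf J z (fun i => x i + y i) = bf J z x + bf J z y.
Proof.
rewrite /bf -big_split; apply: eq_bigr => i _; rewrite -big_split; apply: eq_bigr => j _.
by rewrite !mulrDr.
Qed.
Lemma bfZl c x z : bf J (fun i => c * x i) z = c^* * bf J x z.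
Proof.
rewrite /bf mulr_sumr; apply: eq_bigr => i _; rewrite mulr_sumr; apply: eq_bigr => j _.
by rewrite rmorphM /= !mulrA.
Qed.
Lemma bfZr c x z : bf J z (fun i => c * x i) = c * bf J z x.
Proof.
rewrite /bf mulr_sumr; apply: eq_bigr => i _; rewrite mulr_sumr; apply: eq_bigr => j _.
by rewrite mulrCA !mulrA.
Qed.
Lemma bf_el u y : bf J (ev u) y = \sum_j J u j * y j.
Proof.
rewrite /bf /ev. under eq_bigr do under eq_bigr do rewrite conjC_nat -mulrA.
by rewrite -(sum_dl u (fun i => \sum_j J i j * y j)); apply: eq_bigr => i _; rewrite mulr_sumr.
Qed.
Lemma bf_er x v : bf J x (ev v) = \sum_i (x i)^* * J i v.
Proof. by rewrite /bf /ev; apply: eq_bigr => i _; rewrite sum_dr. Qed.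
Lemma bf_ee u v : bf J (ev u) (ev v) = J u v.
Proof. by rewrite bf_el /ev sum_dr. Qed.
End BF.

Lemma ge0_conj (C : numClosedFieldType) (z : C) : 0 <= z -> z^* = z.
Proof. by move=> h; apply: conj_Creal; apply: ger0_real. Qed.

Section PSD.
Context (C : numClosedFieldType) (I : finType) (J : I -> I -> C).
Hypothesis (hJ : forall x : I -> C, 0 <= bf J x x).

Lemma psd_diag u : 0 <= J u u.
Proof. by rewrite -bf_ee. Qed.

Lemma bf2 u v (s t : C) :
  bf J (fun i => s * ev u i + t * ev v i) (fun i => s * ev u i + t * ev v i)
  = s^* * s * J u u + s^* * t * J u v + t^* * s * J v u + t^* * t * J v v.
Proof.
rewrite bfDl !bfDr !bfZl !bfZr !bf_ee. ring.
Qed.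

Lemma psd_herm u v : J v u = (J u v)^*.
Proof.
have hA t : (t * J u v + t^* * J v u)^* = t * J u v + t^* * J v u.
  have := hJ (fun i => 1 * ev u i + t * ev v i); rewrite bf2 => /ge0_conj hQ.
  have -> : t * J u v + t^* * J v u = (1^* * 1 * J u u + 1^* * t * J u v + t^* * 1 * J v u + t^* * t * J v v) - J u u - t^* * t * J v v.
    rewrite rmorph1; ring.
  rewrite !rmorphB /= hQ [(t^* * t * J v v)^*]rmorphM /= rmorphM /= conjCK.
  rewrite (ge0_conj (psd_diag u)) (ge0_conj (psd_diag v)) (mulrC t). done.
have h1 := hA 1; have h2 := hA 'i.
rewrite !rmorphD !rmorphM /= !rmorph1 conjCi in h1 h2.
rewrite rmorphN /= conjCi opprK in h2.
set a := J u v in h1 h2 *; set b := J v u in h1 h2 *.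
have e : 'i * ((b^* - a) *+ 2) = 0.
  rewrite -mulr_natr mulrA.
  have -> : 'i * (b^* - a) * 2%:R = ((- 'i * a^* + 'i * b^*) - ('i * a + - 'i * b)) + 'i * ((1 * a^* + 1 * b^*) - (1 * a + 1 * b)) by ring.
  by rewrite h1 h2 !subrr mulr0 addr0.
move/eqP: e; rewrite mulf_eq0 (negbTE (neq0Ci C)) /= mulrn_eq0 /= subr_eq0 => /eqP <-.
by rewrite conjCK.
Qed.
Lemma psd_zero u v : J u u = 0 -> J v u = 0.
Proof.
move=> hu; apply/eqP; apply/negPn/negP => hz.
set z := J v u in hz.
set t := - (J v v + 1) / z.
have htz : t * z = - (J v v + 1) by rewrite /t mulrVK // unitfE.
have := hJ (fun i => 1 * ev v i + t * ev u i); rewrite bf2 hu mulr0 addr0.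
rewrite (psd_herm v u) -/z rmorph1 !mulr1 !mul1r -rmorphM /= htz rmorphN /=.
rewrite (ge0_conj (addr_ge0 (psd_diag v) ler01)).
have -> : J v v + - (J v v + 1) + - (J v v + 1) = - (J v v + 2) by ring.
rewrite oppr_ge0 => h.
have h2 : 0 < J v v + 2 by rewrite ltr_wpDl ?psd_diag.
by have := lt_le_trans h2 h; rewrite ltxx.
Qed.
Section Schur.
Context (u0 : I).
Let d := J u0 u0.
Hypothesis hd : d != 0.
Definition schur := fun u v => J u v - J u u0 * J u0 v / d.

Lemma bf_schur x : bf schur x x = bf J x x - bf J x (ev u0) * bf J (ev u0) x / d.
Proof.
rewrite bf_er bf_el /bf mulr_suml mulr_suml -sumrB; apply: eq_bigr => i _.
rewrite mulr_sumr mulr_suml -sumrB; apply: eq_bigr => j _. rewrite /schur. ring.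
Qed.

Lemma schur_psd x : 0 <= bf schur x x.
Proof.
rewrite bf_schur.
have hs : bf J x (ev u0) = (bf J (ev u0) x)^*.
  rewrite bf_er bf_el rmorph_sum; apply: eq_bigr => i _.
  by rewrite rmorphM /= -(psd_herm u0 i) mulrC.
set s2 := bf J (ev u0) x. rewrite hs.
have := hJ (fun i => 1 * x i + (- s2 / d) * ev u0 i).
rewrite bfDl !bfDr !bfZl !bfZr bf_ee hs -/s2.
have hc : (- s2 / d)^* = - s2^* / d.
  by rewrite rmorphM rmorphN fmorphV /= (ge0_conj (psd_diag u0)).
rewrite hc rmorph1 => h; apply: (le_trans h); rewrite le_eqVlt; apply/orP; left; apply/eqP.
rewrite -/d. field. exact: hd.
Qed.
End Schur.
End PSD.

Lemma psd_decomp (C : numClosedFieldType) (I : finType) (J : I -> I -> C) :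
  (forall x : I -> C, 0 <= bf J x x) ->
  exists N (w : 'I_N -> I -> C), forall u v, J u v = \sum_(k < N) w k u * (w k v)^*.
Proof.
move: {2}#|[set u | J u u != 0]| (leqnn #|[set u | J u u != 0]|) => s.
elim: s J => [|s IH] J hs hJ.
  exists 0%N, (fun _ _ => 0) => u v; rewrite big_ord0.
  apply: (psd_zero hJ); apply/eqP; apply/negPn/negP => hv.
  have : v \in [set u | J u u != 0] by rewrite inE.
  by move: hs; rewrite leqn0 => /eqP/cards0_eq ->; rewrite inE.
case: (boolP ([set u | J u u != 0] == set0)) => [/eqP he|].
  exists 0%N, (fun _ _ => 0) => u v; rewrite big_ord0.
  apply: (psd_zero hJ); apply/eqP; apply/negPn/negP => hv.
  have : v \in [set u | J u u != 0] by rewrite inE.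
  by rewrite he inE.
case/set0Pn => u0; rewrite inE => hd.
set d := J u0 u0 in hd.
have hJ' := schur_psd hJ hd.
have hsub : [set u | schur J u0 u u != 0] \subset [set u | J u u != 0] :\ u0.
  apply/subsetP => u; rewrite !inE /schur; apply: contraTT.
  case/nandP => [/negPn/eqP -> | /negPn he]; rewrite negbK; apply/eqP.
    by rewrite mulfK // subrr.
  by rewrite (eqP he) (psd_zero hJ u0 (eqP he)) mulr0 mul0r subrr.
have hc : (#|[set u | (schur J u0 u u != 0)%R]| <= s)%N.
  have := subset_leq_card hsub.
  rewrite (cardsD1 u0 [set u | J u u != 0]) inE hd /= add1n in hs.
  move=> h; exact: leq_trans h hs.
have [N [w' hw']] := IH _ hc hJ'.
set r := sqrtC d.
have hr0 : r != 0 by rewrite sqrtC_eq0.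
have hrc : r^* = r by apply: ge0_conj; rewrite sqrtC_ge0 psd_diag.
have hrr : r * r = d by rewrite -expr2 sqrtCK.
exists N.+1, (fun k u => match (insub (val k) : option 'I_N) with
                       | Some k' => w' k' u | None => J u u0 / r end).
move=> u v; rewrite big_ord_recr /=.
rewrite insubF /= ?ltnn //.
have -> : \sum_(i < N) (match (insub (val (widen_ord (leqnSn N) i)) : option 'I_N) with
                       | Some k' => w' k' u | None => J u u0 / r end) *
             (match (insub (val (widen_ord (leqnSn N) i)) : option 'I_N) with
                       | Some k' => w' k' v | None => J v u0 / r end)^*
          = \sum_(i < N) w' i u * (w' i v)^*.
  by apply: eq_bigr => i _; rewrite /= valK.
rewrite -hw' /schur rmorphM fmorphV /= hrc (psd_herm hJ u0 v) conjCK. rewrite -/d -hrr.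
field. exact: hr0.
Qed.

Lemma sum_pair (C : numClosedFieldType) (A B : finType) (F : A * B -> C) :
  \sum_p F p = \sum_a \sum_b F (a, b).
Proof. by rewrite pair_bigA; apply: eq_bigr => -[a b]. Qed.

Lemma sp (C : numClosedFieldType) (I A B : finType) (F : I * A -> B -> C) :
  \sum_p \sum_b F p b = \sum_(q : I * B) \sum_a F (q.1, a) q.2.
Proof.
rewrite !sum_pair; apply: eq_bigr => i _; exact: exchange_big.
Qed.

Lemma kraus_sum (C : numClosedFieldType) (k m n N : nat) (K : 'I_N -> 'M[C]_(n, m))
  (X : 'I_k * 'I_m -> 'I_k * 'I_m -> C) (x : 'I_k * 'I_n -> C) :
  \sum_p1 \sum_p2 (x p1)^* * (\sum_b \sum_d X (p1.1, b) (p2.1, d) *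
        \sum_kk K kk p1.2 b * (K kk p2.2 d)^*) * x p2
  = \sum_kk bf X (fun q => \sum_c (K kk c q.2)^* * x (q.1, c))
                 (fun q => \sum_c (K kk c q.2)^* * x (q.1, c)).
Proof.
transitivity (\sum_(q1 : 'I_k * 'I_m) \sum_(a : 'I_n) \sum_(q2 : 'I_k * 'I_m) \sum_(c : 'I_n) \sum_(kk < N)
   (x (q1.1, a))^* * X q1 q2 * K kk a q1.2 * (K kk c q2.2)^* * x (q2.1, c)).
  transitivity (\sum_(p1 : 'I_k * 'I_n) \sum_(p2 : 'I_k * 'I_n) \sum_(b : 'I_m) \sum_(d : 'I_m) \sum_(kk < N)
     (x p1)^* * X (p1.1, b) (p2.1, d) * K kk p1.2 b * (K kk p2.2 d)^* * x p2).
    apply: eq_bigr => p1 _; apply: eq_bigr => p2 _.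
    rewrite mulr_sumr mulr_suml; apply: eq_bigr => b _.
    rewrite mulr_sumr mulr_suml; apply: eq_bigr => d _.
    rewrite mulr_sumr mulr_sumr mulr_suml; apply: eq_bigr => kk _; ring.
  under eq_bigr => p1 _ do rewrite exchange_big.
  rewrite sp; apply: eq_bigr => -[i b] _; apply: eq_bigr => a _ /=.
  rewrite sp; apply: eq_bigr => -[j d] _; apply: eq_bigr => c _ /=.
  by apply: eq_bigr => kk _.
symmetry.
transitivity (\sum_(kk < N) \sum_(q1 : 'I_k * 'I_m) \sum_(q2 : 'I_k * 'I_m) \sum_(a : 'I_n) \sum_(c : 'I_n)
   (x (q1.1, a))^* * X q1 q2 * K kk a q1.2 * (K kk c q2.2)^* * x (q2.1, c)).
  apply: eq_bigr => kk _; rewrite /bf; apply: eq_bigr => q1 _; apply: eq_bigr => q2 _.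
  rewrite rmorph_sum mulr_suml mulr_suml; apply: eq_bigr => a _.
  rewrite mulr_sumr; apply: eq_bigr => c _.
  rewrite rmorphM /= conjCK; ring.
rewrite exchange_big; apply: eq_bigr => q1 _.
under eq_bigr => kk _ do rewrite exchange_big.
rewrite exchange_big.
under eq_bigr => q2 _ do under eq_bigr => kk _ do rewrite exchange_big.
under eq_bigr => q2 _ do rewrite exchange_big.
under eq_bigr => a _ do under eq_bigr => c _ do rewrite exchange_big.
under eq_bigr => a _ do rewrite exchange_big.
done.
Qed.

Section Main.
Context (C : numClosedFieldType) (m n : nat) (Phi : {linear 'M[C]_m -> 'M[C]_n}).

Lemma Phi_entry A a c : Phi A a c = \sum_b \sum_d A b d * coef Phi b d a c.
Proof.
rewrite {1}(matrix_sum_delta A) linear_sum summxE; apply: eq_bigr => b _.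
rewrite linear_sum summxE; apply: eq_bigr => d _.
by rewrite linearZ mxE.
Qed.

Lemma kraus_cp : (exists (N : nat) (K : 'I_N -> 'M[C]_(n, m)),
       forall (b d : 'I_m) (a c : 'I_n),
         coef Phi b d a c = \sum_(k < N) K k a b * Num.conj (K k c d)) ->
  completely_positive Phi.
Proof.
move=> [N [K hK]] k X hX x; rewrite /ampl.
rewrite (_ : \sum_i _ = \sum_p1 \sum_p2 (x p1)^* * (\sum_b \sum_d X (p1.1, b) (p2.1, d) *
        \sum_kk K kk p1.2 b * (K kk p2.2 d)^*) * x p2).
  rewrite kraus_sum; apply: sumr_ge0 => kk _; exact: hX.
apply: eq_bigr => p1 _; apply: eq_bigr => p2 _.
rewrite Phi_entry; congr (_ * _ * _); apply: eq_bigr => b _; apply: eq_bigr => d _.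
by rewrite mxE hK.
Qed.

Lemma cp_kraus : completely_positive Phi ->
  exists (N : nat) (K : 'I_N -> 'M[C]_(n, m)),
       forall (b d : 'I_m) (a c : 'I_n),
         coef Phi b d a c = \sum_(k < N) K k a b * Num.conj (K k c d).
Proof.
move=> hcp.
set X := fun p q : 'I_m * 'I_m => ((p.1 == p.2) && (q.1 == q.2))%:R : C.
have hX : psd_fun X.
  move=> x.
  have -> : \sum_i \sum_j (x i)^* * X i j * x j =
     (\sum_i ((i.1 == i.2)%:R * x i))^* * \sum_j ((j.1 == j.2)%:R * x j).
    rewrite rmorph_sum mulr_suml; apply: eq_bigr => i _; rewrite mulr_sumr; apply: eq_bigr => j _.
    by rewrite rmorphM /= conjC_nat /X -mulnb natrM; ring.
  by rewrite mulrC mul_conjC_ge0.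
have hJ := hcp m X hX.
set J := fun p q : 'I_m * 'I_n => coef Phi p.1 q.1 p.2 q.2.
have hJ' : forall x, 0 <= bf J x x.
  move=> x; have := hJ x; congr (0 <= _); apply: eq_bigr => p _; apply: eq_bigr => q _.
  congr (_ * _ * _); rewrite /ampl /J /coef; congr (Phi _ _ _).
  by apply/matrixP => i j; rewrite !mxE /X /= ![_ == i]eq_sym ![_ == j]eq_sym.
have [N [w hw]] := psd_decomp hJ'.
exists N, (fun k => \matrix_(a, b) w k (b, a)) => b d a c.
by have := hw (b, a) (d, c); rewrite /J /= => ->; apply: eq_bigr => k _; rewrite !mxE.
Qed.

Lemma tr_expand (A : 'M[C]_m) : \tr A = \sum_b \sum_d A b d * (b == d)%:R.
Proof. rewrite /mxtrace; apply: eq_bigr => b _; rewrite -[LHS](sum_dr b (A b)); apply: eq_bigr => d _; by rewrite eq_sym. Qed.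

Lemma tr_delta (b d : 'I_m) : \tr (delta_mx b d : 'M[C]_m) = (b == d)%:R.
Proof.
rewrite /mxtrace (bigD1 b) //= mxE eqxx /= big1 ?addr0 // => i hib.
by rewrite mxE (negbTE hib).
Qed.

Lemma tr_Phi A : \tr (Phi A) = \sum_b \sum_d A b d * \sum_a coef Phi b d a a.
Proof.
rewrite /mxtrace; under eq_bigr do rewrite Phi_entry.
rewrite exchange_big; apply: eq_bigr => b _; rewrite exchange_big; apply: eq_bigr => d _.
by rewrite mulr_sumr.
Qed.

Lemma tp_of : (forall b d : 'I_m, \sum_(a < n) coef Phi b d a a = (b == d)%:R) ->
  trace_preserving Phi.
Proof.
move=> h A; rewrite tr_Phi tr_expand; apply: eq_bigr => b _; apply: eq_bigr => d _.
by rewrite h.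
Qed.

Lemma dephase_off (b d : 'I_m) : b != d -> dephase (delta_mx b d : 'M[C]_m) = 0.
Proof.
move=> hbd; apply/matrixP => i j; rewrite !mxE.
case: (i =P j) => [<-|] //.
case: (i =P b) => [->|] //=; by rewrite (negbTE hbd).
Qed.

Lemma dephase_diag (a : 'I_m) : dephase (delta_mx a a : 'M[C]_m) = delta_mx a a.
Proof.
apply/matrixP => i j; rewrite !mxE.
case: (i =P j) => [<-|hij] //.
case: (i =P a) => [ea|] //=; case: (j =P a) => [eb|] //=.
by case: hij; rewrite ea eb.
Qed.

Lemma diag_expand : (forall (a : 'I_n) (b d : 'I_m), b != d -> coef Phi b d a a = 0) ->
  forall A a, Phi A a a = \sum_b A b b * coef Phi b b a a.
Proof.
move=> h A a; rewrite Phi_entry; apply: eq_bigr => b _.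
rewrite (bigD1 b) //= big1 ?addr0 // => d hd; by rewrite h ?mulr0 // eq_sym.
Qed.

Lemma Phi_dephase_entry A i j : Phi (dephase A) i j = \sum_b A b b * coef Phi b b i j.
Proof.
rewrite Phi_entry; apply: eq_bigr => b _.
rewrite (bigD1 b) //= big1 ?addr0; first by rewrite mxE eqxx.
by move=> d hd; rewrite mxE eq_sym (negbTE hd) mul0r.
Qed.

Lemma qo_prob : quantum_operation Phi ->
  cond_prob (fun (b : 'I_m) (a : 'I_n) => coef Phi b b a a).
Proof.
case=> hcp htp; split.
  move=> b a; have [N [K hK]] := cp_kraus hcp; rewrite hK.
  by apply: sumr_ge0 => k _; apply: mul_conjC_ge0.
move=> b; have := htp (delta_mx b b); rewrite tr_delta eqxx /mxtrace => h.
exact: h.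
Qed.

Lemma qo_sum : quantum_operation Phi -> forall b d : 'I_m, \sum_(a < n) coef Phi b d a a = (b == d)%:R.
Proof. by case=> _ htp b d; rewrite -tr_delta -htp. Qed.

End Main.

Unset Implicit Arguments.
Set Strict Implicit.

Theorem proposition15 (C : numClosedFieldType) (m n : nat)
    (Phi : {linear 'M[C]_m -> 'M[C]_n}) :
  (completely_positive Phi <->
     exists (N : nat) (K : 'I_N -> 'M[C]_(n, m)),
       forall (b d : 'I_m) (a c : 'I_n),
         coef Phi b d a c = \sum_(k < N) K k a b * Num.conj (K k c d))
  /\
  (completely_positive Phi ->
     (* (1) *)
     ((quantum_operation Phi /\ detection_incoherent Phi) <->
        exists p : 'I_m -> 'I_n -> C,  (* p b a = p(a|b) *)
          cond_prob p /\
          forall (a : 'I_n) (b d : 'I_m),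
            coef Phi b d a a = p b a * (b == d)%:R)
     /\
     (* (2) *)
     ((quantum_operation Phi /\ creation_incoherent Phi) <->
        exists q : 'I_m -> 'I_n -> C,  (* q a b = p(b|a) *)
          cond_prob q /\
          (forall (a : 'I_m) (b c : 'I_n),
            coef Phi a a b c = q a b * (b == c)%:R) /\
          (forall b d : 'I_m, \sum_(a < n) coef Phi b d a a = (b == d)%:R))
     /\
     (* (3) *)
     ((quantum_operation Phi /\ detection_creation_incoherent Phi) <->
        exists (p : 'I_m -> 'I_n -> C) (q : 'I_m -> 'I_n -> C),
          cond_prob p /\ cond_prob q /\
          (forall (a : 'I_n) (b d : 'I_m),
            coef Phi b d a a = p b a * (b == d)%:R) /\
          (forall (a : 'I_m) (b c : 'I_n),
            coef Phi a a b c = q a b * (b == c)%:R))).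
Proof.
split; first by split; [exact: cp_kraus | exact: kraus_cp].
move=> hcp; split; [|split].
- split.
  + case=> hqo hdi; exists (fun b a => coef Phi b b a a); split; first exact: qo_prob.
    move=> a b d; case: (b =P d) => [<-|/eqP hbd]; first by rewrite mulr1.
    rewrite mulr0; have := congr1 (fun M : 'M[C]_n => M a a) (hdi (delta_mx b d)).
    by rewrite /= dephase_off // linear0 !mxE eqxx.
  + case=> p [[hp0 hp1] hp]; have hoff : forall (a : 'I_n) (b d : 'I_m), b != d -> coef Phi b d a a = 0.
      by move=> a b d hbd; rewrite hp (negbTE hbd) mulr0.
    split; first split => //.
      apply: tp_of => b d; under eq_bigr do rewrite hp.
      by rewrite -mulr_suml hp1 mul1r.
    move=> A; apply/matrixP => i j; rewrite !mxE.
    case: (i =P j) => [<-|] //.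
    rewrite !(diag_expand hoff); apply: eq_bigr => b _; by rewrite mxE eqxx.
- split.
  + case=> hqo hci; exists (fun b a => coef Phi b b a a); split; first exact: qo_prob.
    split; last exact: qo_sum.
    move=> a b c; case: (b =P c) => [<-|/eqP hbc]; first by rewrite mulr1.
    rewrite mulr0; have := congr1 (fun M : 'M[C]_n => M b c) (hci (delta_mx a a)).
    by rewrite /= dephase_diag mxE (negbTE hbc).
  + case=> q [[hq0 hq1] [hq hs]]; split; first split => //; first exact: tp_of.
    move=> A; apply/matrixP => i j; rewrite [RHS]mxE.
    case: (i =P j) => [<-|/eqP hij] //.
    rewrite Phi_dephase_entry big1 // => b _; by rewrite hq (negbTE hij) !mulr0.
- split.
  + case=> hqo hdci; exists (fun b a => coef Phi b b a a), (fun b a => coef Phi b b a a).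
    split; first exact: qo_prob. split; first exact: qo_prob.
    split.
      move=> a b d; case: (b =P d) => [<-|/eqP hbd]; first by rewrite mulr1.
      rewrite mulr0; have := congr1 (fun M : 'M[C]_n => M a a) (hdci (delta_mx b d)).
      by rewrite /= dephase_off // linear0 !mxE eqxx.
    move=> a b c; case: (b =P c) => [<-|/eqP hbc]; first by rewrite mulr1.
    rewrite mulr0; have := congr1 (fun M : 'M[C]_n => M b c) (hdci (delta_mx a a)).
    by rewrite /= dephase_diag mxE (negbTE hbc).
  + case=> p [q [[hp0 hp1] [[hq0 hq1] [hp hq]]]].
    have hoff : forall (a : 'I_n) (b d : 'I_m), b != d -> coef Phi b d a a = 0.
      by move=> a b d hbd; rewrite hp (negbTE hbd) mulr0.
    split; first split => //.
      apply: tp_of => b d; under eq_bigr do rewrite hp.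
      by rewrite -mulr_suml hp1 mul1r.
    move=> A; apply/matrixP => i j; rewrite [LHS]mxE Phi_dephase_entry.
    case: (i =P j) => [<-|/eqP hij].
      by rewrite (diag_expand hoff).
    by rewrite big1 // => b _; rewrite hq (negbTE hij) !mulr0.
Qed.
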